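(* Let $d\ge 1$, $B>0$, $\alpha>0$, $D>0$, and let $\mathcal{X}\subseteq\mathbb{R}^d$ satisfy $\mathcal{X}\supseteq\{x\in\mathbb{R}^d:\|x\|_\infty\le D\}$. If there exists a pair $(f,O)\in\mathcal{O}_{\mathtt{sc}}$ on $\mathcal{X}$ (with parameters $B,\alpha$), then \[ \frac{B}{\alpha}\ \ge\ \frac{D\,d^{1/2}}{4}. \]
   Context: An oracle $O$ for a function $f:\mathcal{X}\to\mathbb{R}$ returns, on query $x\in\mathcal{X}$, a random vector $\hat g(x)\in\mathbb{R}^d$. The class $\mathcal{O}_{\mathtt{sc}}$ consists of all pairs $(f,O)$ such that: $f$ is convex on $\mathcal{X}$; $f$ is $\alpha$-strongly convex on $\mathcal{X}$, i.e. $x\mapsto f(x)-\frac{\alpha}{2}\|x\|_2^2$ is convex on $\mathcal{X}$; $\mathbb{E}[\hat g(x)\mid x]\in\partial f(x)$ for all $x\in\mathcal{X}$ (where $\partial f(x)$ is the subgradient set); and $\Pr(\|\hat g(x)\|_2^2\le B^2\mid x)=1$ for all $x\in\mathcal{X}$. *)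

(* Defs.v *)
From HB Require Import structures.
From mathcomp Require Import all_boot all_order all_algebra.
From mathcomp Require Import all_classical all_reals all_analysis.
Set Implicit Arguments. Unset Strict Implicit. Unset Printing Implicit Defensive.
Import Order.TTheory GRing.Theory Num.Theory.
Local Open Scope classical_set_scope.
Local Open Scope ring_scope.

Section Defs.
Context (R : realType) (d : nat).
Local Notation vec := 'rV[R]_d.

Definition dotv (u v : vec) : R := \sum_(i < d) u 0 i * v 0 i.
Definition sqnorm2 (u : vec) : R := dotv u u.
Definition normInf (u : vec) : R := \big[Num.max/0]_(i < d) `|u 0 i|.

Definition convex_on (X : set vec) (f : vec -> R) : Prop :=
  forall x y t, X x -> X y -> 0 <= t <= 1 ->
    X (t *: x + (1 - t) *: y) ->
    f (t *: x + (1 - t) *: y) <= t * f x + (1 - t) * f y.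

Definition strongly_convex_on (alpha : R) (X : set vec) (f : vec -> R) : Prop :=
  convex_on X (fun x => f x - alpha / 2 * sqnorm2 x).

Definition subdiff (X : set vec) (f : vec -> R) (x : vec) : set vec :=
  [set g | forall y, X y -> f x + dotv g (y - x) <= f y].

Definition expect_vec {dT} {T : measurableType dT} (P : probability T R)
    (G : T -> vec) : vec :=
  \row_i fine (\int[P]_w ((G w) 0 i)%:E).

(* Membership of (f, O) in O_sc with parameters B, alpha on X: the oracle
   answers query x with the random vector ghat x : T -> R^d on (T, P). *)
Definition in_Osc (X : set vec) (B alpha : R) {dT} {T : measurableType dT}
    (P : probability T R) (f : vec -> R) (ghat : vec -> T -> vec) : Prop :=
  [/\ convex_on X f,
      strongly_convex_on alpha X f,
      (forall x, X x -> forall i, measurable_fun setT (fun w => ghat x w 0 i)),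
      (forall x, X x -> subdiff X f x (expect_vec P (ghat x))) &
      (forall x, X x -> P [set w | sqnorm2 (ghat x w) <= B ^+ 2] = 1%E)].
End Defs.

(* Main.v *)
Require Import Defs.
From HB Require Import structures.
From mathcomp Require Import all_boot all_order all_algebra.
From mathcomp Require Import all_classical all_reals all_analysis.
From mathcomp Require Import ring lra measurable_realfun.
Import Order.TTheory GRing.Theory Num.Theory.
Local Open Scope classical_set_scope.
Local Open Scope ring_scope.

Section K.
Context (R : realType) (dT : measure_display) (T : measurableType dT) (P : probability T R).

Lemma Rint_sum (I : eqType) (s : seq I) (F : I -> T -> R) :
  (forall i, P.-integrable setT (EFin \o F i)) ->
  \sum_(i <- s) (\int[P]_(w in setT) F i w) = \int[P]_(w in setT) (\sum_(i <- s) F i w).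
Proof.
move=> hF; elim: s => [|i s IH].
  rewrite big_nil; under eq_Rintegral do rewrite big_nil.
  by rewrite Rintegral_cst ?mul0r //.
rewrite big_cons IH; under [in RHS]eq_Rintegral do rewrite big_cons.
rewrite RintegralD //=; last (try exact: hF); try exact: hF.
apply: (eq_integrable _ (fun w => (\sum_(j <- s) (F j w)%:E)%E)) => //.
  by move=> w _ /=; rewrite sumEFin.
apply: integrable_sum => // j _; exact: hF.
Qed.

Lemma coord_le_sq {d : nat} (u : 'rV[R]_d) (i : 'I_d) : u 0 i ^+ 2 <= sqnorm2 u.
Proof.
rewrite /sqnorm2 /dotv (bigD1 i) //= expr2 lerDl.
by apply: sumr_ge0 => j _; rewrite -expr2 sqr_ge0.
Qed.

Lemma key (d : nat) (h : T -> 'rV[R]_d) (B c : R) (v : 'rV[R]_d) :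
  (forall i, measurable_fun setT (fun w => h w 0 i)) ->
  P [set w | sqnorm2 (h w) <= B ^+ 2] = 1%E ->
  0 <= c -> (forall u, sqnorm2 u <= B ^+ 2 -> dotv u v <= c) ->
  dotv (expect_vec P h) v <= c.
Proof.
move=> hm PE c0 hc.
set E := [set w | sqnorm2 (h w) <= B ^+ 2].
have mE : measurable E.
  have mf : measurable_fun setT (fun w => sqnorm2 (h w)).
    rewrite /sqnorm2 /dotv; apply: measurable_sum => i.
    exact: measurable_funM.
  have := measurable_fun_le measurableT mf (measurable_cst (B ^+ 2)).
  by rewrite setTI.
have PEc : P (~` E) = 0%E by rewrite probability_setC // PE subee.
pose G i w := h w 0 i * \1_E w.
have mG i : measurable_fun setT (G i).
  by apply: measurable_funM => //; exact: measurable_indic.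
have bnd i w : `|G i w| <= 1 + B ^+ 2.
  rewrite /G indicE; case: (boolP (w \in E)) => wE.
    rewrite mulr1; have := coord_le_sq (h w) i.
    have : sqnorm2 (h w) <= B ^+ 2 by move: wE; rewrite inE.
    have := normr_ge0 (h w 0 i); rewrite -(real_normK (num_real (h w 0 i))); nra.
  by rewrite mulr0 normr0; nra.
have intG i : P.-integrable setT (EFin \o (fun w => G i w * v 0 i)).
  apply: (le_integrable measurableT _ _ (finite_measure_integrable_cst P ((1 + B ^+ 2) * `|v 0 i|) measurableT)).
  - by apply/measurable_EFinP; apply: measurable_funM => //; exact: measurable_cst.
  - move=> w _ /=; rewrite lee_fin normrM [X in _ <= X]ger0_norm; last by rewrite mulr_ge0 // addr_ge0 // sqr_ge0.
    by rewrite ler_wpM2r.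
have eqI i : fine (\int[P]_w ((h w) 0 i)%:E) = \int[P]_(w in setT) G i w.
  rewrite /Rintegral; congr fine; apply: ae_eq_integral => //.
  - exact/measurable_EFinP.
  - exact/measurable_EFinP.
  exists (~` E); split => //; first exact: measurableC.
  move=> w /= hw; apply: contra_not hw => wE _; congr EFin.
  by rewrite /G indicE mem_set // mulr1.
rewrite /dotv.
have eqJ i : expect_vec P h 0 i * v 0 i = \int[P]_(w in setT) (G i w * v 0 i).
  rewrite /expect_vec mxE eqI RintegralZr //.
  apply: (le_integrable measurableT _ _ (finite_measure_integrable_cst P (1 + B ^+ 2) measurableT)).
  - exact/measurable_EFinP.
  - move=> w _ /=; rewrite lee_fin [X in _ <= X]ger0_norm //.
    by rewrite addr_ge0 // sqr_ge0.
rewrite (eq_bigr _ (fun i _ => eqJ i)).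
rewrite Rint_sum //.
apply: (@le_trans _ _ (\int[P]_(w in setT) c)).
  apply: le_Rintegral => //.
    apply: (eq_integrable _ (fun w => (\sum_(i < d) (G i w * v 0 i)%:E)%E)) => //.
      by move=> w _ /=; rewrite sumEFin.
    by apply: integrable_sum => // i _; exact: intG.
    exact: (finite_measure_integrable_cst P c measurableT).
  move=> w _; rewrite /G indicE; case: (boolP (w \in E)) => wE.
    under eq_bigr do rewrite mulr1.
    by apply: hc; move: wE; rewrite inE.
  by under eq_bigr do rewrite mulr0 mul0r; rewrite big1.
rewrite (Rintegral_cst _ measurableT). rewrite [fine _](_ : _ = 1) ?mulr1 //. exact: (congr1 fine (probability_setT P)).
Qed.
End K.

Section Main.
Context {R : realType} {d : nat}.

Lemma dotvN (u w : 'rV[R]_d) : dotv u (- w) = - dotv u w.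
Proof. by rewrite /dotv -sumrN; apply: eq_bigr => i _; rewrite mxE mulrN. Qed.

Lemma sqnormN (w : 'rV[R]_d) : sqnorm2 (- w) = sqnorm2 w.
Proof. by rewrite /sqnorm2 /dotv; apply: eq_bigr => i _; rewrite mxE mulrNN. Qed.

Lemma sqnorm0 : sqnorm2 (0 : 'rV[R]_d) = 0.
Proof. by rewrite /sqnorm2 /dotv big1 // => i _; rewrite mxE mul0r. Qed.

Lemma sqnorm_cst (D : R) : sqnorm2 (const_mx D : 'rV[R]_d) = d%:R * D ^+ 2.
Proof.
rewrite /sqnorm2 /dotv (eq_bigr (fun _ => D * D)); last by move=> i _; rewrite mxE.
rewrite big_const_ord. elim: (d) => [|n IH]; first by rewrite mul0r. by rewrite iterS IH mulrS expr2; ring.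
Qed.

Lemma normInf_le (u : 'rV[R]_d) (D : R) : 0 <= D -> (forall i, `|u 0 i| <= D) -> normInf u <= D.
Proof.
move=> D0 hu; rewrite /normInf; apply: (big_ind (fun x => x <= D)) => //.
by move=> a b ha hb; rewrite ge_max ha hb.
Qed.

Lemma young (u v : 'rV[R]_d) (l : R) :
  0 <= l ^+ 2 * sqnorm2 v - 2 * l * dotv u v + sqnorm2 u.
Proof.
have -> : l ^+ 2 * sqnorm2 v - 2 * l * dotv u v + sqnorm2 u =
  \sum_(i < d) (l * v 0 i - u 0 i) ^+ 2.
  rewrite /sqnorm2 /dotv !mulr_sumr -sumrB -big_split /=.
  by apply: eq_bigr => i _; ring.
by apply: sumr_ge0 => i _; exact: sqr_ge0.
Qed.
End Main.

Theorem lemma1 (R : realType) (d : nat) (hd : (1 <= d)%N) (B alpha D : R)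
  (hB : 0 < B) (halpha : 0 < alpha) (hD : 0 < D)
  (X : set 'rV[R]_d) (hX : [set x | normInf x <= D] `<=` X)
  (dT : measure_display) (T : measurableType dT) (P : probability T R)
  (f : 'rV[R]_d -> R) (ghat : 'rV[R]_d -> T -> 'rV[R]_d)
  (hO : in_Osc X B alpha P f ghat) :
  D * Num.sqrt (d%:R) / 4 <= B / alpha.
Proof.
case: hO => _ hsc hmeas hsub hbd.
set s := Num.sqrt (d%:R : R).
have d0 : 0 < (d%:R : R) by rewrite ltr0n.
have s0 : 0 < s by rewrite sqrtr_gt0.
have ss : s ^+ 2 = d%:R by rewrite sqr_sqrtr // ltW.
set c : 'rV[R]_d := const_mx D.
have Xc : X c.
  apply: hX; apply: normInf_le => [|i]; first exact: ltW.
  by rewrite mxE ger0_norm // ltW.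
have Xmc : X (- c).
  apply: hX; apply: normInf_le => [|i]; first exact: ltW.
  by rewrite !mxE normrN ger0_norm // ltW.
have X0 : X 0.
  apply: hX; apply: normInf_le => [|i]; first exact: ltW.
  by rewrite mxE normr0 ltW.
have Sc : sqnorm2 c = d%:R * D ^+ 2 by exact: sqnorm_cst.
pose l := B / (D * s).
have l0 : 0 < l by rewrite divr_gt0 // mulr_gt0.
have lDs : l * (D * s) = B by rewrite /l divfK // mulf_neq0 // gt_eqF.
have bound : forall x v, X x -> sqnorm2 v = d%:R * D ^+ 2 ->
    dotv (expect_vec P (ghat x)) v <= B * (D * s).
  move=> x v Xx Sv; apply: key => //.
  - by move=> i; apply: hmeas.
  - by apply: hbd.
  - by rewrite mulr_ge0 // ltW // mulr_gt0.
  move=> u hu; have := young u v l; rewrite Sv -ss => hy.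
  have e : l ^+ 2 * (s ^+ 2 * D ^+ 2) = B ^+ 2 by rewrite -lDs; ring.
  nra.
have e0 : 2^-1 *: c + (1 - 2^-1) *: (- c) = 0.
  have -> : 1 - 2^-1 = 2^-1 :> R by field.
  by rewrite scalerN subrr.
have hconv := hsc c (- c) (2^-1) Xc Xmc.
rewrite e0 sqnorm0 sqnormN Sc in hconv.
have ht : (0 <= (2^-1 : R) <= 1).
  by apply/andP; split; [rewrite invr_ge0 ler0n | rewrite invf_le1 // ler1n].
have {}hconv := hconv ht X0.
have h1 := hsub c Xc 0 X0.
have h2 := hsub (- c) Xmc 0 X0.
rewrite sub0r dotvN in h1.
rewrite sub0r opprK in h2.
have b1 := bound c c Xc Sc.
have b2 := bound (- c) (- c) Xmc (etrans (sqnormN c) Sc).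
rewrite dotvN in b2.
have key2 : alpha * (s ^+ 2 * D ^+ 2) <= 2 * (B * (D * s)).
  rewrite ss; nra.
rewrite ler_pdivlMr // mulrAC ler_pdivrMr //.
nra.
Qed.
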